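(* Let $G$ be a second countable locally compact Hausdorff groupoid with a fixed left Haar system $\lambda=\{\lambda^u\}_{u\in G^0}$, and let $(\Phi,\Psi)$ be a complementary pair of $N$-functions with $\Phi\in\Delta_2$. For $f\in C_c(G)$, the function $g:G^0\to\mathbb R$, $g(u)=\|f^u\|^0_\Phi$, where $f^u=f|_{G^u}$, is continuous on $G^0$ with compact support.
   Context: $G^0$ is the unit space, $r(x)=xx^{-1}$, $G^u=r^{-1}(u)$. The left Haar system consists of positive Radon measures $\lambda^u$ with support $G^u$ such that $u\mapsto\int f\,d\lambda^u$ is continuous for every $f\in C_c(G)$ and $\int f(xy)d\lambda^{d(x)}(y)=\int f(y)d\lambda^{r(x)}(y)$, where $d(x)=x^{-1}x$. An $N$-function is a continuous even convex $\Phi:\mathbb R\to[0,\infty)$ with $\Phi(x)=0$ iff $x=0$, $\Phi(x)/x\to0$ as $x\to0$, $\Phi(x)/x\to\infty$ as $x\to\infty$; complementary function $\Psi(y)=\sup_{x\ge0}(x|y|-\Phi(x))$. $\Phi\in\Delta_2$: there is $k>0$ with $\Phi(2x)\le k\Phi(x)$ for all $x\ge0$ ($G$ non-compact), resp. for all $x\ge x_0$ for some $x_0>0$ ($G$ compact). For a measurable $h$ on $G^u$, the gauge norm is $\|h\|^0_\Phi=\inf\{k>0:\int_{G^u}\Phi(|h|/k)d\lambda^u\le1\}$. *)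

(* Defs.v *)
From HB Require Import structures.
From mathcomp Require Import all_boot all_order all_algebra.
From mathcomp Require Import all_classical all_reals all_analysis.
Set Implicit Arguments. Unset Strict Implicit. Unset Printing Implicit Defensive.
Import Order.TTheory GRing.Theory Num.Theory.
Local Open Scope classical_set_scope.
Local Open Scope ring_scope.

Notation borelT T := (g_sigma_algebraType (@open T)).

(* Topological groupoid (Renault's axioms) on the carrier T, with composable
   pairs [comp], multiplication [mul] (meaningful on [comp]) and inverse [inv]. *)
Definition is_topological_groupoid (T : ptopologicalType) (comp : set (T * T))
    (mul : T -> T -> T) (inv : T -> T) : Prop :=
  (forall x y z, comp (x, y) -> comp (y, z) ->
         [/\ comp (mul x y, z), comp (x, mul y z) &
             mul (mul x y) z = mul x (mul y z)]) /\
  (forall x, inv (inv x) = x) /\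
  (forall x, comp (inv x, x)) /\
  (forall x z, comp (z, x) -> mul (mul z x) (inv x) = z) /\
  (forall x y, comp (x, y) -> mul (inv x) (mul x y) = y) /\
  continuous inv /\
  {within comp, continuous (fun p : T * T => mul p.1 p.2)}.

Definition grp_r {T} (mul : T -> T -> T) (inv : T -> T) (x : T) := mul x (inv x).
Definition grp_d {T} (mul : T -> T -> T) (inv : T -> T) (x : T) := mul (inv x) x.
Definition unit_space {T} (mul : T -> T -> T) (inv : T -> T) : set T :=
  range (grp_r mul inv).
Definition range_fiber {T} (mul : T -> T -> T) (inv : T -> T) (u : T) : set T :=
  grp_r mul inv @^-1` [set u].

Definition Cc {T : ptopologicalType} {V : topologicalType} (zero : V) (f : T -> V) :=
  continuous f /\ compact (closure [set x | f x <> zero]).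

Definition measure_support {R : realType} {T : ptopologicalType}
    (mu : set (borelT T) -> \bar R) : set T :=
  [set x | forall U : set T, open U -> U x -> (0 < mu U)%E].

Definition radon {R : realType} {T : ptopologicalType}
    (mu : set (borelT T) -> \bar R) : Prop :=
  [/\ (forall K : set T, compact K -> (mu K < +oo)%E),
      (forall A : set (borelT T), measurable A ->
         mu A = ereal_inf [set mu U | U in [set U : set T | open U /\ A `<=` U]]) &
      (forall U : set T, open U ->
         mu U = ereal_sup [set mu K | K in [set K : set T | compact K /\ K `<=` U]])].

Definition left_Haar_system {R : realType} {T : ptopologicalType}
    (mul : T -> T -> T) (inv : T -> T)
    (lam : T -> {measure set (borelT T) -> \bar R}) : Prop :=
  [/\ (forall u, unit_space mul inv u ->
         radon (lam u) /\ measure_support (lam u) = range_fiber mul inv u),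
      (forall f : T -> R, Cc 0 f ->
         {within unit_space mul inv,
           continuous ((fun u => fine (\int[lam u]_y (f y)%:E)) : T -> R^o)}) &
      (forall (f : T -> R) (x : T), Cc 0 f ->
         (\int[lam (grp_d mul inv x)]_(y in range_fiber mul inv (grp_d mul inv x))
            (f (mul x y))%:E
         = \int[lam (grp_r mul inv x)]_(y in range_fiber mul inv (grp_r mul inv x))
            (f y)%:E)%E)].

Definition N_function {R : realType} (Phi : R -> R) : Prop :=
  continuous (Phi : R^o -> R^o) /\
  (forall x, Phi (- x) = Phi x) /\
  (forall x y (t : R), 0 <= t <= 1 ->
     Phi (t * x + (1 - t) * y) <= t * Phi x + (1 - t) * Phi y) /\
  (forall x, 0 <= Phi x) /\
  (forall x, Phi x = 0 <-> x = 0) /\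
  (Phi x / x @[x --> 0^'] --> 0) /\
  (Phi x / x @[x --> +oo] --> +oo).

Definition complementary {R : realType} (Phi Psi : R -> R) : Prop :=
  forall y, Psi y = sup [set x * `|y| - Phi x | x in [set x : R | 0 <= x]].

Definition Delta2 {R : realType} (Gcompact : Prop) (Phi : R -> R) : Prop :=
  (~ Gcompact -> exists k : R, 0 < k /\ forall x, 0 <= x -> Phi (2 * x) <= k * Phi x) /\
  (Gcompact -> exists k x0 : R, [/\ 0 < k, 0 < x0 &
                  forall x, x0 <= x -> Phi (2 * x) <= k * Phi x]).

Definition gauge_norm {R : realType} {T : ptopologicalType}
    (Phi : R -> R) (mu : set (borelT T) -> \bar R) (A : set T) (h : T -> R) : R :=
  inf [set k : R | 0 < k /\ (\int[mu]_(y in A) (Phi (h y / k))%:E <= 1)%E].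

(* Main.v *)
Require Import Defs.
From HB Require Import structures.
From mathcomp Require Import all_boot all_order all_algebra.
From mathcomp Require Import all_classical all_reals all_analysis.
From mathcomp Require Import lra ring measurable_realfun.
Import Order.TTheory GRing.Theory Num.Theory.
Import numFieldNormedType.Exports.
Local Open Scope classical_set_scope.
Local Open Scope ring_scope.

Lemma cont_meas (R : realType) (T : ptopologicalType) (h : T -> R) :
  continuous h -> measurable_fun (setT : set (borelT T)) h.
Proof.
move=> ch; apply: (measurability _ (measurable_realfun.RGenOpens.measurableE R)).
move=> _ [_ [a [b ->]] <-]; apply: measurableI => //.
apply: sub_sigma_algebra.
by move/continuousP: ch; apply; exact: interval_open.
Qed.

Section integ.
Context (R : realType) (T : ptopologicalType)
  (mu : {measure set (borelT T) -> \bar R}).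

Lemma fiber_eq (D : set T) (h : T -> R) :
  measurable (D : set (borelT T)) -> mu (~` D) = 0%E -> continuous h ->
  (forall y, 0 <= h y) ->
  (\int[mu]_y (h y)%:E = \int[mu]_(y in D) (h y)%:E)%E.
Proof.
move=> mD muN ch h0.
have mh := (measurable_EFinP _ _).2 (@cont_meas R T h ch).

have mC : measurable (~` D : set (borelT T)) by exact: measurableC.
rewrite -(setUCr D) (ge0_integral_setU _ mD mC); first last.
- by rewrite disj_set2E setICr.
- by move=> y _; rewrite lee_fin.
- by rewrite setUCr.
rewrite (null_set_integral mC) ?adde0 //.
exact: (measurable_funS measurableT (subsetT _) mh).
Qed.

Lemma finite_int (h : T -> R) (K : set T) :
  hausdorff_space T -> continuous h -> (forall y, 0 <= h y) ->
  compact K -> (forall y, ~ K y -> h y = 0) -> (mu K < +oo)%E ->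
  (\int[mu]_y (h y)%:E < +oo)%E.
Proof.
move=> hT ch h0 cK hK muK.
have mK : measurable (K : set (borelT T)).
  rewrite -(setCK K); apply: measurableC; apply: sub_sigma_algebra.
  by apply: closed_openC; exact: compact_closed.
have mh := (measurable_EFinP _ _).2 (@cont_meas R T h ch).

have cpt : compact (h @` K).
  by apply: continuous_compact => //; exact: continuous_subspaceT.
have [M [_ HM]] := compact_bounded cpt.
have hM : forall y, K y -> h y <= `|M| + 1.
  move=> y Ky; have M1 : M < M + 1 by rewrite ltrDl.
  have := HM (M + 1) M1 (h y) (ex_intro2 _ _ y Ky erefl).
  move=> /= H; apply: le_trans (ler_norm (h y)) _; apply: le_trans H _.
  by rewrite lerD2r ler_norm.
have -> : (\int[mu]_y (h y)%:E = \int[mu]_(y in K) (h y)%:E)%E.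
  rewrite [RHS]integral_mkcond; apply: eq_integral => y _.
  rewrite /patch; case: ifPn => // /negP; rewrite inE => nK.
  by rewrite hK.
apply: (@le_lt_trans _ _ (\int[mu]_(y in K) (cst (`|M| + 1)%:E) y)%E).
  apply: ge0_le_integral => //.
  all: try by move=> y Ky; rewrite /cst lee_fin ?hM.
  all: try exact: (measurable_funS measurableT (subsetT _) mh).
rewrite integral_cst //.
have M0 : 0 <= `|M| + 1 by rewrite addr_ge0.
by apply: lte_mul_pinfty.
Qed.
End integ.
Lemma support_null (R : realType) (T : ptopologicalType)
  (mu : {measure set (borelT T) -> \bar R}) (D : set T) :
  @second_countable T -> measure_support mu = D ->
  measurable (D : set (borelT T)) /\ mu (~` D) = 0%E.
Proof.
move=> [B cB [Bo Bb]] suppD.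
pose B' := [set b | B b /\ mu b = 0%E].
have /countable_injP [f finj] : countable B'.
  by apply: sub_countable cB; apply: subset_card_le => b [].
pose g n := xget set0 [set b | B' b /\ f b = n].
have gP n : g n = set0 \/ B' (g n).
  have [[b Pb]|nb] := pselect (exists b, [set b | B' b /\ f b = n] b).
    by right; have [] := xgetPex set0 (ex_intro _ b Pb).
  by left; apply: xgetPN => b Pb; apply: nb; exists b.
have opB b : B' b -> open b by case=> /Bo.
have mO (U : set T) : open U -> measurable (U : set (borelT T)).
  by move=> oU; apply: sub_sigma_algebra.
have eqN : ~` D = \bigcup_n g n.
  apply/seteqP; split => x.
  - move=> nDx; rewrite -suppD in nDx.
    have [U [oU Ux mU]] : exists U : set T, [/\ open U, U x & ~ (0 < mu U)%E].
      apply: contra_notP nDx => H V oV Vx.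
      by apply: contra_notP (fun h => H (ex_intro _ V (And3 oV Vx h))).
    have mU0 : mu U = 0%E.
      by apply/eqP; rewrite eq_le measure_ge0 andbT; rewrite leNgt; apply/negP.
    have nU : nbhs x U by apply: open_nbhs_nbhs.
    have [b [Bb0 bx] bU] := Bb x U nU.
    have B'b : B' b.
      split => //; apply/eqP; rewrite eq_le measure_ge0 andbT -mU0.
      by apply: le_measure => //; rewrite inE; apply: mO => //; apply: Bo.
    exists (f b) => //.
    have := xgetPex set0 (ex_intro (fun c => B' c /\ f c = f b) b (conj B'b erefl)).
    rewrite -/(g (f b)) => -[B'g fg].
    by rewrite (finj _ _ _ _ fg) // inE.
  - move=> [n _ gnx] Dx.
    case: (gP n) => [g0|[Bg mg]]; first by rewrite g0 in gnx.
    rewrite -suppD in Dx.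
    by move: (Dx _ (Bo _ Bg) gnx); rewrite mg ltxx.
have oN : open (~` D).
  by rewrite eqN; apply: bigcup_open => n _; case: (gP n) => [->|/opB //]; exact: open0.
split.
  by rewrite -(setCK D); apply: measurableC; apply: mO.
rewrite eqN; apply/negligibleP; first by apply: mO; rewrite -eqN.
apply: negligible_bigcup => n; apply/negligibleP.
  by case: (gP n) => [->|/opB /mO //]; exact: measurable0.
by case: (gP n) => [->|[]//]; exact: measure0.
Qed.
Lemma abstract_cont (R : realType) (T : topologicalType) (A : set T)
  (Fr : T -> R -> R) (g : T -> R) :
  (forall u k, A u -> 0 < k -> 0 <= Fr u k) ->
  (forall u k k', A u -> 0 < k -> k <= k' -> Fr u k' <= (k / k') * Fr u k) ->
  (forall u, A u -> g u = inf [set k | 0 < k /\ Fr u k <= 1]) ->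
  (forall k u0, 0 < k -> A u0 ->
     (fun u => Fr u k : R^o) @ within A (nbhs u0) --> (Fr u0 k : R^o)) ->
  {within A, continuous (g : T -> R^o)}.
Proof.
move=> F0 Fsc gE Fc.
pose S u := [set k : R | 0 < k /\ Fr u k <= 1].
have Sne u : A u -> S u !=set0.
  move=> Au; have F1 := F0 u 1 Au ltr01.
  have k0 : 0 < 1 + Fr u 1 by rewrite ltr_pwDl.
  exists (1 + Fr u 1); split => //.
  apply: le_trans (Fsc _ _ _ Au ltr01 _) _; first by rewrite lerDl.
  by rewrite mul1r mulrC ler_pdivrMr // mul1r lerDr.
have Slb u : lbound (S u) 0 by move=> k [/ltW].
have Shl u : has_lbound (S u) by exists 0; exact: Slb.
have mono u k k' : A u -> 0 < k -> k <= k' -> Fr u k' <= Fr u k.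
  move=> Au k0 kk'; apply: le_trans (Fsc _ _ _ Au k0 kk') _.
  apply: ler_piMl; first exact: F0.
  by rewrite ler_pdivrMr ?mul1r // (lt_le_trans k0 kk').
have ga u : A u -> 0 <= g u.
  by move=> Au; rewrite gE //; apply: lb_le_inf; [exact: Sne | exact: Slb].
apply/subspace_continuousP => u0 Au0.
apply/cvgrPdist_lt => e e0.
have up : \forall u \near within A (nbhs u0), g u < g u0 + e.
  have [k1 [k10 Fk1] k1lt] : exists2 k1, S u0 k1 & k1 < g u0 + e / 2.
    by apply: inf_lt; [exact: Sne | rewrite -gE // ltrDl divr_gt0].
  have k0 : 0 < g u0 + e / 2 by rewrite ltr_pwDr ?divr_gt0 ?ga.
  have Fk : Fr u0 (g u0 + e / 2) < 1.
    apply: le_lt_trans (Fsc _ _ _ Au0 k10 (ltW k1lt)) _.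
    apply: (@le_lt_trans _ _ (k1 / (g u0 + e / 2) * 1)).
      by apply: ler_wpM2l => //; rewrite divr_ge0 // ltW.
    by rewrite mulr1 ltr_pdivrMr // mul1r.
  have := Fc _ _ k0 Au0; move/cvgrPdist_lt/(_ (1 - Fr u0 (g u0 + e / 2))).
  rewrite subr_gt0 => /(_ Fk) H.
  apply: filterS2 H (withinT _ _) => u /[swap] Au.
  rewrite ltr_norml => /andP[H2 _].
  have : S u (g u0 + e / 2) by split => //; apply: ltW; lra.
  move/(ge_inf (Shl u)); rewrite -gE // => H3.
  by apply: le_lt_trans H3 _; rewrite ltrD2l ltr_pdivrMr // ltr_pMr // ltr1n.
have lo : \forall u \near within A (nbhs u0), g u0 - e < g u.
  have [neg|pos] := ltP (g u0 - e) 0.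
    by apply: filterS (withinT _ _) => u Au; apply: lt_le_trans neg (ga _ Au).
  have k0 : 0 < g u0 - e / 2 by lra.
  have Fk : 1 < Fr u0 (g u0 - e / 2).
    rewrite ltNge; apply/negP => Fle.
    have : S u0 (g u0 - e / 2) by [].
    move/(ge_inf (Shl u0)); rewrite -gE //; lra.
  have := Fc _ _ k0 Au0; move/cvgrPdist_lt/(_ (Fr u0 (g u0 - e / 2) - 1)).
  rewrite subr_gt0 => /(_ Fk) H.
  apply: filterS2 H (withinT _ _) => u /[swap] Au.
  rewrite ltr_norml => /andP[_ H1].
  have : g u0 - e / 2 <= g u.
    rewrite (gE u) //; apply: lb_le_inf; first exact: Sne.
    move=> k' [k'0 Fk']; rewrite leNgt; apply/negP => k'lt.
    have := mono u _ _ Au k'0 (ltW k'lt); lra.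
  lra.
apply: filterS2 up lo => u H1 H2.
rewrite /from_subspace ltr_norml; apply/andP; split; lra.
Qed.
Lemma phi0 {R : realType} {Phi : R -> R} : N_function Phi -> Phi 0 = 0.
Proof. by case=> _ [_ [_ [_ [H _]]]]; apply/H. Qed.

Lemma phi_ge0 {R : realType} {Phi : R -> R} : N_function Phi -> forall x, 0 <= Phi x.
Proof. by case=> _ [_ [_ [H _]]]. Qed.

Lemma phi_scale (R : realType) (Phi : R -> R) (t x : R) : N_function Phi ->
  0 <= t <= 1 -> Phi (t * x) <= t * Phi x.
Proof.
move=> NP t01; have := (NP.2.2.1 x 0 t t01).
by rewrite mulr0 addr0 (phi0 NP) mulr0 addr0.
Qed.

Lemma cont_hk (R : realType) (T : ptopologicalType) (Phi : R -> R) (a : T -> R) (k : R) :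
  N_function Phi -> continuous a -> continuous (fun y => Phi (a y / k)).
Proof.
move=> NP ca y.
apply: (@continuous_comp _ _ _ (fun y => a y / k) Phi).
  apply: (@continuous_comp _ _ _ a (fun r => r / k)); first exact: ca.
  exact: mulrr_continuous.
exact: NP.1.
Qed.

Lemma scal_int (R : realType) (T : ptopologicalType)
  (mu : {measure set (borelT T) -> \bar R}) (Phi : R -> R) (a : T -> R) (k k' : R) :
  N_function Phi -> continuous a -> (forall y, 0 <= a y) -> 0 < k -> k <= k' ->
  (\int[mu]_y (Phi (a y / k'))%:E <= (k / k')%:E * \int[mu]_y (Phi (a y / k))%:E)%E.
Proof.
move=> NP ca a0 k0 kk'.
have k'0 : 0 < k' by apply: lt_le_trans kk'.
have mh := (measurable_EFinP _ _).2 (@cont_meas R T _ (@cont_hk R T Phi a k NP ca)).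
rewrite -ge0_integralZl //; last 2 first.
- by move=> y _; rewrite lee_fin phi_ge0.
- by rewrite lee_fin divr_ge0 // ltW.
apply: ge0_le_integral => //.
all: try by move=> y _; rewrite lee_fin phi_ge0.
all: try exact: (measurable_EFinP _ _).2 (@cont_meas R T _ (@cont_hk R T Phi a k' NP ca)).
all: try by move=> y _; rewrite -EFinM lee_fin mulr_ge0 ?divr_ge0 ?phi_ge0 // ltW.
all: try (apply: measurable_funeM; exact: mh).
move=> y _; rewrite -EFinM lee_fin.
have -> : a y / k' = (k / k') * (a y / k).
  by field; apply/andP; split; rewrite gt_eqF.
apply: phi_scale => //.
apply/andP; split; first by rewrite divr_ge0 // ltW.
by rewrite ler_pdivrMr // mul1r.
Qed.
Lemma r_cont (T : ptopologicalType) (comp : set (T * T)) (mul : T -> T -> T) (inv : T -> T) :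
  is_topological_groupoid comp mul inv -> continuous (grp_r mul inv).
Proof.
move=> [_ [invinv [invxx [_ [_ [cinv cmul]]]]]] x.
have cy y : comp (y, inv y) by have := invxx (inv y); rewrite invinv.
have H1 := (subspace_continuousP _ _).1 cmul (x, inv x) (cy x).
have H2 : (fun y => (y, inv y)) @ nbhs x --> within comp (nbhs (x, inv x)).
  move=> W /= HW.
  have HP : (y, inv y) @[y --> x] --> (x, inv x).
    by apply: cvg_pair; [exact: cvg_id | exact: cinv].
  change (nbhs x [set y | W (y, inv y)]).
  have : nbhs x [set y | comp (y, inv y) -> W (y, inv y)] := HP _ HW.
  by apply: filterS => y /=; apply; exact: cy.
have := cvg_comp _ _ H2 H1; rewrite /grp_r /=. exact.
Qed.

Theorem theorem3p1 (R : realType) (T : ptopologicalType)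
    (comp : set (T * T)) (mul : T -> T -> T) (inv : T -> T)
    (lam : T -> {measure set (borelT T) -> \bar R})
    (Phi Psi : R -> R) (V : normedModType R) (f : T -> V) :
  is_topological_groupoid comp mul inv ->
  hausdorff_space T -> locally_compact [set: T] -> @second_countable T ->
  left_Haar_system mul inv lam ->
  N_function Phi -> N_function Psi -> complementary Phi Psi ->
  Delta2 (compact [set: T]) Phi ->
  Cc 0 f ->
  let g : T -> R^o := fun u => gauge_norm Phi (lam u) (range_fiber mul inv u)
                                 (fun x => `|f x|) in
  {within unit_space mul inv, continuous g} /\
  compact (closure (unit_space mul inv `&` [set u | g u <> 0])).
Proof.
move=> TG hT _ sc [Hl1 Hl2 _] NP _ _ _ [cf cK] g.
have rc := @r_cont T comp mul inv TG.
move: cK; set K := closure [set x | f x <> 0] => cK.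
set G0 := unit_space mul inv.
pose a := fun y => `|f y|.
have ca : continuous a.
  by move=> y; apply: continuous_comp; [exact: cf | exact: norm_continuous].
have a0 y : 0 <= a y by exact: normr_ge0.
have fK y : ~ K y -> f y = 0.
  by move=> nK; apply: contra_notP nK => fy; apply: subset_closure.
have hkK k y : ~ K y -> Phi (a y / k) = 0 by move=> nK; rewrite /a fK // normr0 mul0r phi0.
have clK : closed K by exact: closed_closure.
have Cchk k : Cc 0 (fun y => Phi (a y / k)).
  split; first exact: cont_hk.
  apply: (subclosed_compact _ cK); first exact: closed_closure.
  rewrite (closure_id K).1 //; apply: closureS => y hy.
  by apply: contra_notP hy => /hkK.
pose F u k := (\int[lam u]_y (Phi (a y / k))%:E)%E.
have F0 u k : (0 <= F u k)%E by apply: integral_ge0 => y _; rewrite lee_fin phi_ge0.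
have Fin u k : G0 u -> (F u k < +oo)%E.
  move=> Gu; apply: (@finite_int R T (lam u) _ K hT (@cont_hk R T Phi a k NP ca)).
  - by move=> y; exact: phi_ge0.
  - exact: cK.
  - by move=> y /hkK ->.
  - by have [[H _ _] _] := Hl1 u Gu; apply: H; exact: cK.
have FE u k : G0 u -> F u k = (fine (F u k))%:E.
  by move=> Gu; rewrite fineK // ge0_fin_numE ?Fin.
have Ffib u k : G0 u ->
    F u k = (\int[lam u]_(y in range_fiber mul inv u) (Phi (a y / k))%:E)%E.
  move=> Gu; have [mD nD] := @support_null R T (lam u) _ sc (Hl1 u Gu).2.
  apply: fiber_eq => //; first exact: (@cont_hk R T Phi a k NP ca).
  by move=> y; exact: phi_ge0.
split.
  apply: (@abstract_cont R T G0 (fun u k => fine (F u k))).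
  - by move=> u k _ _; apply: fine_ge0.
  - move=> u k k' Gu k0 kk'.
    rewrite -lee_fin EFinM -!FE //.
    exact: scal_int.
  - move=> u Gu; rewrite /g /gauge_norm; congr inf.
    apply/seteqP; split => k [k0 H]; split => //.
      by rewrite -lee_fin -FE // Ffib.
    by move: H; rewrite -lee_fin -FE // Ffib.
  - move=> k u0 k0 Gu0.
    exact: ((subspace_continuousP _ _).1 (Hl2 _ (Cchk k)) u0 Gu0).
have cpt : compact (grp_r mul inv @` K).
  by apply: continuous_compact => //; exact: continuous_subspaceT.
apply: (subclosed_compact _ cpt); first exact: closed_closure.
rewrite (closure_id (grp_r mul inv @` K)).1; last exact: compact_closed.
apply: closureS => u [_ gu]; apply: contra_notP gu => nrK.
rewrite /g /gauge_norm.
have -> : [set k | 0 < k /\ (\int[lam u]_(y in range_fiber mul inv u)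
            (Phi (`|f y| / k))%:E <= 1)%E] = [set k | 0 < k].
  apply/seteqP; split => k; first by case.
  move=> k0; split => //; rewrite integral0_eq ?lee01 // => y fy.
  rewrite fK ?normr0 ?mul0r ?phi0 //.
  by move=> Ky; apply: nrK; exists y.
have hl : has_lbound [set k : R | 0 < k] by exists 0 => k /ltW.
have ne : [set k : R | 0 < k] !=set0 by exists 1; rewrite /= ltr01.
have i0 : 0 <= inf [set k : R | 0 < k] by apply: lb_le_inf => // k /ltW.
have [ip|] := ltP 0 (inf [set k : R | 0 < k]); last by move=> H; apply/eqP; rewrite eq_le H i0.
have : [set k : R | 0 < k] (inf [set k : R | 0 < k] / 2) by rewrite /= divr_gt0.
move/(ge_inf hl); lra.
Qed.
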